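(* Let $G$ be a connected bisplit graph, and let $(X,Y,Z)$ be a partition of $V(G)$ into stable sets with $Y$ complete to $Z$ chosen so that $|Y\cup Z|$ is maximum among all such partitions. Let $X_Y$ be the set of vertices of $X$ all of whose neighbours lie in $Y$, and $X_Z$ the set of vertices of $X$ all of whose neighbours lie in $Z$. If $X_Y$ and $X_Z$ are both non-empty, then $G$ has the de Bruijn-Erd\H{o}s property: the metric space $(V(G), d_G)$ has a universal line or at least $|V(G)|$ distinct lines.
   Context: A connected graph $G$ is bisplit if its vertex set can be partitioned into three stable sets $X$, $Y$, $Z$ such that every vertex of $Y$ is adjacent to every vertex of $Z$. $d_G$ is the shortest-path distance. In a metric space $(V,\rho)$, an element $b$ is between $a$ and $c$ if $\rho(a,b)+\rho(b,c)=\rho(a,c)$; three elements are collinear if one is between the other two. For distinct $a,b\in V$, the line generated by $a$ and $b$ is the set consisting of $a$, $b$, and all $c$ such that $a,b,c$ are collinear. A line is universal if it equals $V$. *)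

(* Defs.v *)
(* A finite simple graph is a symmetric irreflexive
   relation e on a finType T (vertex set = T). *)
From mathcomp Require Import all_boot.
Set Implicit Arguments.
Unset Strict Implicit.
Unset Printing Implicit Defensive.

Section Graph.
Variables (T : finType) (e : rel T).

Definition simple_graph : Prop := symmetric e /\ irreflexive e.

Definition connected_graph : Prop := forall x y : T, connect e x y.

Definition walkn (x y : T) (n : nat) : bool :=
  [exists p : n.-tuple T, path e x p && (last x p == y)].

(* shortest-path distance d_G; for connected graphs a shortest path
   has fewer than #|T| edges, so the minimum below is the true distance *)
Definition dist (x y : T) : nat :=
  \big[minn/#|T|]_(n < #|T| | walkn x y n) n.

Definition between (a b c : T) : bool := dist a b + dist b c == dist a c.

Definition collinear (a b c : T) : bool :=
  [|| between a b c, between b a c | between a c b].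

Definition line (a b : T) : {set T} :=
  [set c | [|| c == a, c == b | collinear a b c]].

Definition lines : {set {set T}} :=
  [set line ab.1 ab.2 | ab in [set ab : T * T | ab.1 != ab.2]].

Definition universal_line_exists : Prop :=
  exists a b : T, a != b /\ line a b = [set: T].

Definition de_bruijn_erdos : Prop :=
  universal_line_exists \/ #|T| <= #|lines|.

Definition stable (S : {set T}) : Prop :=
  forall u v, u \in S -> v \in S -> ~~ e u v.

Definition bisplit_partition (X Y Z : {set T}) : Prop :=
  [/\ [&& [disjoint X & Y], [disjoint X & Z] & [disjoint Y & Z]],
      X :|: Y :|: Z = [set: T],
      [/\ stable X, stable Y & stable Z] &
      forall y z, y \in Y -> z \in Z -> e y z].

Definition max_bisplit_partition (X Y Z : {set T}) : Prop :=
  bisplit_partition X Y Z /\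
  forall X' Y' Z', bisplit_partition X' Y' Z' -> #|Y' :|: Z'| <= #|Y :|: Z|.

Definition X_nbrs_in (X S : {set T}) : {set T} :=
  [set x in X | [forall v, e x v ==> (v \in S)]].

End Graph.

(* Main.v *)
Require Import Defs.
From mathcomp Require Import all_boot.
From mathcomp Require Import zify.

Set Implicit Arguments.
Unset Strict Implicit.
Unset Printing Implicit Defensive.

Section Dist.
Variables (T : finType) (e : rel T).
Hypothesis sym : symmetric e.

Lemma walkn0 x y : walkn e x y 0 = (x == y).
Proof.
apply/existsP/idP => [[p]|/eqP <-].
  by rewrite tuple0 /=.
by exists [tuple]; rewrite /=.
Qed.

Lemma walknS x y n : walkn e x y n.+1 = [exists w, e x w && walkn e w y n].
Proof.
apply/existsP/existsP => [[p]|[w /andP[exw /existsP[p hp]]]].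
  case/tupleP: p => w p /= /andP[/andP[exw hp] hl].
  by exists w; rewrite exw; apply/existsP; exists p; rewrite hp.
by exists [tuple of w :: p]; rewrite /= exw.
Qed.

Lemma wcons x w y n : e x w -> walkn e w y n -> walkn e x y n.+1.
Proof. by move=> h1 h2; rewrite walknS; apply/existsP; exists w; rewrite h1. Qed.

Lemma wsnoc n x w y : walkn e x w n -> e w y -> walkn e x y n.+1.
Proof.
elim: n x => [|n IH] x.
  by rewrite walkn0 => /eqP -> h; apply: (wcons h); rewrite walkn0.
rewrite walknS => /existsP[v /andP[h1 h2]] h3; exact: (wcons h1 (IH _ h2 h3)).
Qed.

Lemma walk_sym n x y : walkn e x y n -> walkn e y x n.
Proof.
elim: n x y => [|n IH] x y.
  by rewrite !walkn0 eq_sym.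
rewrite walknS => /existsP[w /andP[h1 h2]].
apply: (wsnoc (IH _ _ h2)); by rewrite sym.
Qed.

Lemma dist_sym x y : dist e x y = dist e y x.
Proof. rewrite /dist; apply: eq_bigl => i; apply/idP/idP; exact: walk_sym. Qed.

Lemma col_cases a b c : collinear e a b c =
  [|| dist e a b + dist e b c == dist e a c,
      dist e a b + dist e a c == dist e b c |
      dist e a c + dist e b c == dist e a b].
Proof. by rewrite /collinear /between (dist_sym b a) (dist_sym c b). Qed.

Hypothesis bigT : 4 < #|T|.

Lemma bigmin_le (I : eqType) (r : seq I) (P : pred I) (F : I -> nat) d j :
  j \in r -> P j -> \big[minn/d]_(i <- r | P i) F i <= F j.
Proof.
elim: r => // i r IH; rewrite inE big_cons => /orP[/eqP <-|hj] hP.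
  by rewrite hP geq_minl.
case: (P i); last exact: IH.
by apply: leq_trans (geq_minr _ _) (IH hj hP).
Qed.

Lemma dist_le n x y : walkn e x y n -> n < #|T| -> dist e x y <= n.
Proof.
move=> hw hn; rewrite /dist.
exact: (bigmin_le (fun i : 'I_#|T| => nat_of_ord i) _ (j := Ordinal hn) (mem_index_enum _) hw).
Qed.

Lemma dist_ge k x y : k <= #|T| -> (forall m, m < k -> ~~ walkn e x y m) -> k <= dist e x y.
Proof.
move=> hk hm; rewrite /dist; apply: (big_ind (fun v => k <= v)) => //.
  by move=> u v hu hv; rewrite leq_min hu hv.
move=> i hi; rewrite leqNgt; apply/negP => lt; by move: (hm _ lt); rewrite hi.
Qed.

Lemma wone x y : e x y -> walkn e x y 1.
Proof. by move=> h; apply: (wcons h); rewrite walkn0. Qed.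

Lemma d_le1 x y : e x y -> dist e x y <= 1.
Proof. move=> h; apply: dist_le; [exact: wone| lia]. Qed.
Lemma d_le2 x w y : e x w -> e w y -> dist e x y <= 2.
Proof. move=> h1 h2; apply: dist_le; [exact: (wcons h1 (wone h2))| lia]. Qed.
Lemma d_le3 x w1 w2 y : e x w1 -> e w1 w2 -> e w2 y -> dist e x y <= 3.
Proof. move=> h1 h2 h3; apply: dist_le; [exact: (wcons h1 (wcons h2 (wone h3)))| lia]. Qed.
Lemma d_le4 x w1 w2 w3 y : e x w1 -> e w1 w2 -> e w2 w3 -> e w3 y -> dist e x y <= 4.
Proof. move=> h1 h2 h3 h4; apply: dist_le; [exact: (wcons h1 (wcons h2 (wcons h3 (wone h4))))| lia]. Qed.

Lemma d_ge1 x y : x != y -> 1 <= dist e x y.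
Proof. move=> hxy; apply: dist_ge; first lia. by case=> // _; rewrite walkn0. Qed.

Lemma d_ge2 x y : x != y -> ~~ e x y -> 2 <= dist e x y.
Proof.
move=> hxy hn; apply: dist_ge; first lia.
case=> [|[|//]] _; first by rewrite walkn0.
rewrite walknS; apply/existsP => -[w /andP[h]]; rewrite walkn0 => /eqP hw; subst w.
by rewrite h in hn.
Qed.

Lemma d_ge3 x y : x != y -> ~~ e x y -> (forall w, e x w -> e w y -> False) -> 3 <= dist e x y.
Proof.
move=> hxy hn hc; apply: dist_ge; first lia.
case=> [|[|[|//]]] _; first by rewrite walkn0.
  rewrite walknS; apply/existsP => -[w /andP[h]]; rewrite walkn0 => /eqP hw; subst w.
  by rewrite h in hn.
rewrite walknS; apply/existsP => -[w /andP[h]]; rewrite walknS => /existsP[w' /andP[h']].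
rewrite walkn0 => /eqP hw; subst w'; exact: (hc w).
Qed.

End Dist.

Section Part.
Variables (T : finType) (e : rel T).
Hypothesis sym : symmetric e.
Hypothesis irr : irreflexive e.
Hypothesis bigT : 4 < #|T|.

Lemma line_l a b : a \in line e a b. Proof. by rewrite inE eqxx. Qed.
Lemma line_r a b : b \in line e a b. Proof. by rewrite inE eqxx orbT. Qed.
Lemma in_line a b c : collinear e a b c -> c \in line e a b.
Proof. by rewrite inE => ->; rewrite !orbT. Qed.
Lemma notin_line a b c : c != a -> c != b -> ~~ collinear e a b c -> c \notin line e a b.
Proof. by move=> h1 h2 h3; rewrite inE (negbTE h1) (negbTE h2). Qed.

Lemma dist1 x y : e x y -> dist e x y = 1.
Proof.
move=> h; apply/eqP; rewrite eqn_leq (d_le1 bigT h) (d_ge1 e bigT) //.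
by apply/eqP => exy; subst; rewrite irr in h.
Qed.
Lemma dist2 x w y : x != y -> ~~ e x y -> e x w -> e w y -> dist e x y = 2.
Proof. by move=> h1 h2 h3 h4; apply/eqP; rewrite eqn_leq (d_le2 bigT h3 h4) (d_ge2 bigT). Qed.
Lemma dist3 x w1 w2 y : x != y -> ~~ e x y -> (forall w, e x w -> e w y -> False) ->
  e x w1 -> e w1 w2 -> e w2 y -> dist e x y = 3.
Proof. by move=> h1 h2 h3 h4 h5 h6; apply/eqP; rewrite eqn_leq (d_le3 bigT h4 h5 h6) (d_ge3 bigT). Qed.

Variables X Y Z : {set T}.
Hypothesis P : bisplit_partition e X Y Z.

Lemma XY v : v \in X -> v \in Y -> False.
Proof. case: P => /and3P[d _ _] _ _ _ hx; by rewrite (disjointFr d hx). Qed.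
Lemma XZ v : v \in X -> v \in Z -> False.
Proof. case: P => /and3P[_ d _] _ _ _ hx; by rewrite (disjointFr d hx). Qed.
Lemma YZ v : v \in Y -> v \in Z -> False.
Proof. case: P => /and3P[_ _ d] _ _ _ hx; by rewrite (disjointFr d hx). Qed.
Lemma ZY v : v \in Z -> v \in Y -> False.
Proof. by move=> h1 h2; apply: (YZ h2 h1). Qed.
Lemma cov v : [\/ v \in X, v \in Y | v \in Z].
Proof.
case: P => _ hc _ _; have : v \in X :|: Y :|: Z by rewrite hc inE.
by rewrite !inE => /orP[/orP[]|] h; [apply: Or31|apply: Or32|apply: Or33].
Qed.
Lemma stX u v : u \in X -> v \in X -> e u v -> False.
Proof. by case: P => _ _ [h _ _] _ hu hv huv; move: (h _ _ hu hv); rewrite huv. Qed.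
Lemma stY u v : u \in Y -> v \in Y -> e u v -> False.
Proof. by case: P => _ _ [_ h _] _ hu hv huv; move: (h _ _ hu hv); rewrite huv. Qed.
Lemma stZ u v : u \in Z -> v \in Z -> e u v -> False.
Proof. by case: P => _ _ [_ _ h] _ hu hv huv; move: (h _ _ hu hv); rewrite huv. Qed.
Lemma cYZ y z : y \in Y -> z \in Z -> e y z.
Proof. by case: P => _ _ _ h; apply: h. Qed.
Lemma cZY z y : z \in Z -> y \in Y -> e z y.
Proof. by move=> hz hy; rewrite sym; apply: cYZ. Qed.

Lemma nXY x y : x \in X -> y \in Y -> x != y.
Proof. by move=> hx hy; apply/eqP => E; subst; apply: (XY hx hy). Qed.
Lemma nXZ x y : x \in X -> y \in Z -> x != y.
Proof. by move=> hx hy; apply/eqP => E; subst; apply: (XZ hx hy). Qed.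
Lemma nYZ x y : x \in Y -> y \in Z -> x != y.
Proof. by move=> hx hy; apply/eqP => E; subst; apply: (YZ hx hy). Qed.
Lemma nYX x y : x \in Y -> y \in X -> x != y.
Proof. by move=> hx hy; rewrite eq_sym nXY. Qed.
Lemma nZX x y : x \in Z -> y \in X -> x != y.
Proof. by move=> hx hy; rewrite eq_sym nXZ. Qed.
Lemma nZY x y : x \in Z -> y \in Y -> x != y.
Proof. by move=> hx hy; rewrite eq_sym nYZ. Qed.

Lemma nadj (S S' : {set T}) u v : (forall w, e u w -> w \in S) -> v \in S' ->
  (forall v, v \in S -> v \in S' -> False) -> ~~ e u v.
Proof. by move=> hu hv hS; apply/negP => h; exact: (hS _ (hu _ h) hv). Qed.

Lemma nocom u v : (forall w, e u w -> w \in Z) -> (forall w, e v w -> w \in Y) ->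
  forall w, e u w -> e w v -> False.
Proof. by move=> hu hv w h1 h2; apply: (YZ (hv w _) (hu w h1)); rewrite sym. Qed.

Ltac clean := repeat match goal with H : ?t |- _ =>
  lazymatch t with context [dist] => fail | _ => clear H end end.
Ltac notcol := rewrite col_cases //; apply/negP => /or3P[] /eqP; clean; lia.

Lemma F1 b y y' z1 : b \in X -> (forall w, e b w -> w \in Z) -> e b z1 ->
  y \in Y -> y' \in Y -> y != y' -> y' \notin line e b y.
Proof.
move=> bX bB bz1 yY y'Y ne; have z1Z := bB _ bz1.
have h1 : dist e b y = 2 := dist2 (nXY bX yY) (nadj bB yY ZY) bz1 (cZY z1Z yY).
have h2 : dist e b y' = 2 := dist2 (nXY bX y'Y) (nadj bB y'Y ZY) bz1 (cZY z1Z y'Y).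
have h3 : dist e y y' = 2.
  by apply: (dist2 ne _ (cYZ yY z1Z) (cZY z1Z y'Y)); apply/negP; apply: stY.
by apply: notin_line; [exact: nYX | rewrite eq_sym | notcol].
Qed.

Lemma F2 b y z z1 : b \in X -> (forall w, e b w -> w \in Z) -> e b z1 ->
  y \in Y -> z \in Z -> z \in line e b y.
Proof.
move=> bX bB bz1 yY zZ; have z1Z := bB _ bz1.
have h1 : dist e b y = 2 := dist2 (nXY bX yY) (nadj bB yY ZY) bz1 (cZY z1Z yY).
have h2 : dist e y z = 1 := dist1 (cYZ yY zZ).
apply: in_line; rewrite col_cases //; apply/or3P.
case: (boolP (e b z)) => hbz.
  by apply: Or33; rewrite (dist1 hbz) h1 h2.
have h3 : dist e b z = 3.
  apply: (dist3 (nXZ bX zZ) hbz _ bz1 (cZY z1Z yY) (cYZ yY zZ)).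
  by move=> w hw hwz; apply: (stZ (bB _ hw) zZ hwz).
by apply: Or31; rewrite h1 h2 h3.
Qed.

Lemma F3 b y x z1 y1 z2 : b \in X -> (forall w, e b w -> w \in Z) -> e b z1 ->
  y \in Y -> x \in X -> e x y1 -> y1 \in Y -> e x z2 -> z2 \in Z ->
  x \in line e b y -> e x y.
Proof.
move=> bX bB bz1 yY xX xy1 y1Y xz2 z2Z; have z1Z := bB _ bz1.
apply: contraLR => nxy.
have xb : x != b by apply/eqP => E; subst; apply: (YZ y1Y (bB _ xy1)).
have h1 : dist e b y = 2 := dist2 (nXY bX yY) (nadj bB yY ZY) bz1 (cZY z1Z yY).
have h2 : dist e y x = 2.
  apply: (dist2 (nYX yY xX) _ (cYZ yY z2Z)); [by rewrite sym | by rewrite sym].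
have h3 : 2 <= dist e b x.
  by apply: (d_ge2 bigT); [rewrite eq_sym | apply/negP; apply: stX].
have h4 : dist e b x <= 3 by apply: (d_le3 bigT bz1 (cZY z1Z y1Y)); rewrite sym.
by apply: notin_line; [ | exact: nXY | notcol].
Qed.

Lemma dAB x b yx z1 : x \in X -> (forall w, e x w -> w \in Y) -> e x yx ->
  b \in X -> (forall w, e b w -> w \in Z) -> e b z1 -> dist e b x = 3.
Proof.
move=> xX xA xyx bX bB bz1.
have xb : x != b by apply/eqP => E; subst; apply: (YZ (xA _ xyx) (bB _ xyx)).
apply: (dist3 _ _ (nocom bB xA) bz1 (cZY (bB _ bz1) (xA _ xyx))); first by rewrite eq_sym.
  by apply/negP; apply: stX.
by rewrite sym.
Qed.

Lemma F4 x x' b yx yx' z1 : x \in X -> (forall w, e x w -> w \in Y) -> e x yx ->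
  x' \in X -> (forall w, e x' w -> w \in Y) -> e x' yx' ->
  b \in X -> (forall w, e b w -> w \in Z) -> e b z1 -> x != x' ->
  x' \notin line e b x.
Proof.
move=> xX xA xyx x'X x'A x'yx' bX bB bz1 ne; have z1Z := bB _ bz1.
have h1 := dAB xX xA xyx bX bB bz1.
have h2 := dAB x'X x'A x'yx' bX bB bz1.
have h3 : 1 <= dist e x x' by apply: (d_ge1 e bigT ne).
have h4 : dist e x x' <= 4.
  apply: (d_le4 bigT xyx (cYZ (xA _ xyx) z1Z) (cZY z1Z (x'A _ x'yx'))); by rewrite sym.
have x'b : x' != b by apply/eqP => E; subst; apply: (YZ (x'A _ x'yx') (bB _ x'yx')).
by apply: notin_line; [ | rewrite eq_sym | notcol].
Qed.

Lemma F5 x b z yx z1 : x \in X -> (forall w, e x w -> w \in Y) -> e x yx ->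
  b \in X -> (forall w, e b w -> w \in Z) -> e b z1 -> z \in Z -> ~~ e b z ->
  z \notin line e b x.
Proof.
move=> xX xA xyx bX bB bz1 zZ nbz; have z1Z := bB _ bz1; have yxY := xA _ xyx.
have h1 := dAB xX xA xyx bX bB bz1.
have h2 : dist e b z = 3.
  apply: (dist3 (nXZ bX zZ) nbz _ bz1 (cZY z1Z yxY) (cYZ yxY zZ)).
  by move=> w hw hwz; apply: (stZ (bB _ hw) zZ hwz).
have h3 : dist e x z = 2 := dist2 (nXZ xX zZ) (nadj xA zZ YZ) xyx (cYZ yxY zZ).
by apply: notin_line; [exact: nZX | exact: nZX | notcol].
Qed.

Lemma F6 x b y yx z1 : x \in X -> (forall w, e x w -> w \in Y) -> e x yx ->
  b \in X -> (forall w, e b w -> w \in Z) -> e b z1 -> y \in Y -> ~~ e x y ->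
  y \notin line e b x.
Proof.
move=> xX xA xyx bX bB bz1 yY nxy; have z1Z := bB _ bz1; have yxY := xA _ xyx.
have h1 := dAB xX xA xyx bX bB bz1.
have h2 : dist e b y = 2 := dist2 (nXY bX yY) (nadj bB yY ZY) bz1 (cZY z1Z yY).
have h3 : dist e x y = 3.
  apply: (dist3 (nXY xX yY) nxy _ xyx (cYZ yxY z1Z) (cZY z1Z yY)).
  by move=> w hw hwy; apply: (stY (xA _ hw) yY hwy).
by apply: notin_line; [exact: nYX | exact: nYX | notcol].
Qed.

Lemma F7 x b c yx z1 yc zc : x \in X -> (forall w, e x w -> w \in Y) -> e x yx ->
  b \in X -> (forall w, e b w -> w \in Z) -> e b z1 ->
  c \in X -> e c yc -> yc \in Y -> e c zc -> zc \in Z -> c \notin line e b x.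
Proof.
move=> xX xA xyx bX bB bz1 cX cyc ycY czc zcZ; have z1Z := bB _ bz1; have yxY := xA _ xyx.
have h1 := dAB xX xA xyx bX bB bz1.
have cb : c != b by apply/eqP => E; subst; apply: (YZ ycY (bB _ cyc)).
have cx : c != x by apply/eqP => E; subst; apply: (YZ (xA _ czc) zcZ).
have h2 : 2 <= dist e b c by apply: (d_ge2 bigT); [rewrite eq_sym | apply/negP; apply: stX].
have h3 : dist e b c <= 3 by apply: (d_le3 bigT bz1 (cZY z1Z ycY)); rewrite sym.
have h4 : 2 <= dist e x c by apply: (d_ge2 bigT); [rewrite eq_sym | apply/negP; apply: stX].
have h5 : dist e x c <= 3 by apply: (d_le3 bigT xyx (cYZ yxY zcZ)); rewrite sym.
by apply: notin_line; [ | | notcol].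
Qed.

Lemma F8 x b c yx z1 zc : x \in X -> (forall w, e x w -> w \in Y) -> e x yx ->
  b \in X -> (forall w, e b w -> w \in Z) -> e b z1 ->
  c \in X -> (forall w, e c w -> w \in Z) -> e c zc -> c != b -> c \notin line e b x.
Proof.
move=> xX xA xyx bX bB bz1 cX cB czc cb; have z1Z := bB _ bz1; have yxY := xA _ xyx.
have h1 := dAB xX xA xyx bX bB bz1.
have h2 := dAB xX xA xyx cX cB czc.
rewrite dist_sym // in h2.
have h3 : 1 <= dist e b c by apply: (d_ge1 e bigT); rewrite eq_sym.
have h4 : dist e b c <= 4.
  apply: (d_le4 bigT bz1 (cZY z1Z yxY) (cYZ yxY (cB _ czc))); by rewrite sym.
have cx : c != x by apply/eqP => E; subst; apply: (YZ (xA _ czc) (cB _ czc)).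
by apply: notin_line; [ | | notcol].
Qed.

Lemma F9 a x x' ya yx zx yx' zx' : a \in X -> (forall w, e a w -> w \in Y) -> e a ya ->
  x \in X -> e x yx -> yx \in Y -> e x zx -> zx \in Z ->
  x' \in X -> e x' yx' -> yx' \in Y -> e x' zx' -> zx' \in Z -> x != x' ->
  x' \notin line e a x.
Proof.
move=> aX aA aya xX xyx yxY xzx zxZ x'X x'yx' yx'Y x'zx' zx'Z ne; have yaY := aA _ aya.
have ax : a != x by apply/eqP => E; subst; apply: (YZ (aA _ xzx) zxZ).
have ax' : a != x' by apply/eqP => E; subst; apply: (YZ (aA _ x'zx') zx'Z).
have h1 : 2 <= dist e a x by apply: (d_ge2 bigT) => //; apply/negP; apply: stX.
have h2 : dist e a x <= 3 by apply: (d_le3 bigT aya (cYZ yaY zxZ)); rewrite sym.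
have h3 : 2 <= dist e a x' by apply: (d_ge2 bigT) => //; apply/negP; apply: stX.
have h4 : dist e a x' <= 3 by apply: (d_le3 bigT aya (cYZ yaY zx'Z)); rewrite sym.
have h5 : 2 <= dist e x x' by apply: (d_ge2 bigT) => //; apply/negP; apply: stX.
have h6 : dist e x x' <= 3 by apply: (d_le3 bigT xyx (cYZ yxY zx'Z)); rewrite sym.
by apply: notin_line; [rewrite eq_sym | rewrite eq_sym | notcol].
Qed.

Lemma F10a a x z w zx : a \in X -> (forall w, e a w -> w \in Y) ->
  x \in X -> e x zx -> zx \in Z -> e a w -> e w x -> z \in Z -> z \notin line e a x.
Proof.
move=> aX aA xX xzx zxZ aw wx zZ; have wY := aA _ aw.
have ax : a != x by apply/eqP => E; subst; apply: (YZ (aA _ xzx) zxZ).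
have h1 : dist e a x = 2 by apply: (dist2 ax _ aw wx); apply/negP; apply: stX.
have h2 : dist e a z = 2 := dist2 (nXZ aX zZ) (nadj aA zZ YZ) aw (cYZ wY zZ).
have h3 : 1 <= dist e x z by apply: (d_ge1 e bigT (nXZ xX zZ)).
have h4 : dist e x z <= 2 by apply: (d_le2 bigT _ (cYZ wY zZ)); rewrite sym.
by apply: notin_line; [exact: nZX | exact: nZX | notcol].
Qed.

Lemma F10b a x y ya zx : a \in X -> (forall w, e a w -> w \in Y) -> e a ya ->
  x \in X -> e x zx -> zx \in Z -> (forall w, e a w -> e w x -> False) ->
  y \in Y -> y \in line e a x -> e a y.
Proof.
move=> aX aA aya xX xzx zxZ nc yY; have yaY := aA _ aya.
apply: contraLR => nay.
have ax : a != x by apply/eqP => E; subst; apply: (YZ (aA _ xzx) zxZ).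
have h1 : dist e a y = 3.
  apply: (dist3 (nXY aX yY) nay _ aya (cYZ yaY zxZ) (cZY zxZ yY)).
  by move=> w hw hwy; apply: (stY (aA _ hw) yY hwy).
have h2 : dist e a x = 3.
  apply: (dist3 ax _ nc aya (cYZ yaY zxZ)); [by apply/negP; apply: stX | by rewrite sym].
have h3 : 1 <= dist e x y by apply: (d_ge1 e bigT (nXY xX yY)).
have h4 : dist e x y <= 2 := d_le2 bigT xzx (cZY zxZ yY).
by apply: notin_line; [exact: nYX | exact: nYX | notcol].
Qed.

Lemma FU y0 z0 c : y0 \in Y -> z0 \in Z -> c \in Y \/ c \in Z -> c \in line e y0 z0.
Proof.
move=> y0Y z0Z [cY|cZ].
  case: (eqVneq c y0) => [->|ne]; first exact: line_l.
  apply: in_line; rewrite col_cases //; apply/or3P; apply: Or31.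
  rewrite (dist1 (cYZ y0Y z0Z)) (dist1 (cZY z0Z cY)).
  rewrite (dist2 (w := z0) _ _ (cYZ y0Y z0Z) (cZY z0Z cY)) //; first by rewrite eq_sym.
  by apply/negP; apply: stY.
case: (eqVneq c z0) => [->|ne]; first exact: line_r.
apply: in_line; rewrite col_cases //; apply/or3P; apply: Or32.
rewrite (dist1 (cYZ y0Y z0Z)) (dist1 (cYZ y0Y cZ)).
rewrite (dist2 (w := y0) _ _ (cZY z0Z y0Y) (cYZ y0Y cZ)) //; first by rewrite eq_sym.
by apply/negP; apply: stZ.
Qed.

End Part.

Lemma bpI (T : finType) (e : rel T) (X Y Z : {set T}) :
  (forall v, v \in X -> v \in Y -> False) -> (forall v, v \in X -> v \in Z -> False) ->
  (forall v, v \in Y -> v \in Z -> False) -> (forall v, [|| v \in X, v \in Y | v \in Z]) ->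
  stable e X -> stable e Y -> stable e Z -> (forall y z, y \in Y -> z \in Z -> e y z) ->
  bisplit_partition e X Y Z.
Proof.
move=> h1 h2 h3 hc sX sY sZ hYZ; split => //.
- apply/and3P; split; apply/pred0P => v /=; apply/negbTE/negP => /andP[]; eauto.
- by apply/setP => v; rewrite !inE -orbA hc.
Qed.

Lemma bp_mirror (T : finType) (e : rel T) (X Y Z : {set T}) :
  symmetric e -> bisplit_partition e X Y Z -> bisplit_partition e X Z Y.
Proof.
move=> sym P; case: (P) => _ _ [sX sY sZ] _.
apply: bpI => //.
- by move=> v; apply: (XZ P).
- by move=> v; apply: (XY P).
- by move=> v; apply: (ZY P).
- by move=> v; case: (cov P v) => ->; rewrite ?orbT.
- by move=> z y hz hy; apply: (cZY sym P).
Qed.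

Lemma M0 (T : finType) (e : rel T) (X Y Z : {set T}) :
  irreflexive e -> connected_graph e -> bisplit_partition e X Y Z ->
  (forall X' Y' Z', bisplit_partition e X' Y' Z' -> #|Y' :|: Z'| <= #|Y :|: Z|) ->
  forall x, x \in X -> exists w, e x w.
Proof.
move=> irr conn P Hmax x xX.
case: (pickP (e x)) => [w h|H]; first by exists w.
have allx : forall v, v = x.
  move=> v; case/connectP: (conn x v) => -[|w p] /= hp -> //.
  by case/andP: hp; rewrite H.
have P' : bisplit_partition e set0 setT set0.
  apply: bpI => //; try (by move=> v; rewrite !inE);
    try (by move=> u v _ _; rewrite (allx u) (allx v) irr);
    by move=> u v; rewrite !inE.
have := Hmax _ _ _ P'; rewrite setU0 cardsT.
have -> : Y :|: Z = set0.
  apply/setP => v; rewrite !inE (allx v); apply/negbTE/negP => /orP[h|h].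
    exact: (XY P xX h).
  exact: (XZ P xX h).
rewrite cards0.
have : 0 < #|T| by apply/card_gt0P; exists x.
lia.
Qed.

Lemma M1 (T : finType) (e : rel T) (X Y Z : {set T}) :
  symmetric e -> irreflexive e -> bisplit_partition e X Y Z ->
  (forall X' Y' Z', bisplit_partition e X' Y' Z' -> #|Y' :|: Z'| <= #|Y :|: Z|) ->
  forall x, x \in X -> (forall w, e x w -> w \in Y) -> exists2 y, y \in Y & ~~ e x y.
Proof.
move=> sym irr P Hmax x xX xA.
case: (pickP [pred y | (y \in Y) && ~~ e x y]) => [y /andP[]|H]; first by exists y.
have cxY : forall y, y \in Y -> e x y.
  by move=> y hy; move: (H y) => /=; rewrite hy /= => /negbFE.
case: (P) => _ _ [sX sY sZ] _.
have P' : bisplit_partition e (X :\ x) Y (x |: Z).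
  apply: bpI.
  - move=> v; rewrite !inE => /andP[_ h1] h2; exact: (XY P h1 h2).
  - move=> v; rewrite !inE => /andP[hv h1] /orP[/eqP E|h2].
      by rewrite E eqxx in hv.
    exact: (XZ P h1 h2).
  - move=> v h1; rewrite !inE => /orP[/eqP E|h2].
      by subst; exact: (XY P xX h1).
    exact: (YZ P h1 h2).
  - move=> v; rewrite !inE; case: (eqVneq v x) => [->|ne]; rewrite ?eqxx ?orbT //=.
    by case: (cov P v) => ->; rewrite ?orbT.
  - move=> u v; rewrite !inE => /andP[_ hu] /andP[_ hv]; exact: sX.
  - exact: sY.
  - move=> u v; rewrite !inE => /orP[/eqP->|hu] /orP[/eqP->|hv].
    + by rewrite irr.
    + by apply/negP => h; exact: (YZ P (xA _ h) hv).
    + by rewrite sym; apply/negP => h; exact: (YZ P (xA _ h) hu).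
    + exact: sZ.
  - move=> y z hy; rewrite !inE => /orP[/eqP->|hz].
      by rewrite sym; apply: cxY.
    exact: (cYZ P hy hz).
have := Hmax _ _ _ P'.
have nx : x \notin Y :|: Z.
  by rewrite inE; apply/norP; split; apply/negP => h; [exact: (XY P xX h) | exact: (XZ P xX h)].
rewrite setUCA cardsU1 nx.
lia.
Qed.

Inductive vclass (T : finType) (e : rel T) (X Y Z : {set T}) (b v : T) : Prop :=
| CY of v \in Y
| CZ of v \in Z
| CA of v \in X & (forall w, e v w -> w \in Y)
| Cb of v = b
| CB of v \in X & (forall w, e v w -> w \in Z) & v != b
| CC of v \in X & (exists2 y, e v y & y \in Y) & (exists2 z, e v z & z \in Z).

Section Main.
Variables (T : finType) (e : rel T).
Hypotheses (sym : symmetric e) (irr : irreflexive e).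
Variables (X Y Z : {set T}).
Hypothesis P : bisplit_partition e X Y Z.
Hypothesis Hmax : forall X' Y' Z', bisplit_partition e X' Y' Z' -> #|Y' :|: Z'| <= #|Y :|: Z|.
Hypothesis HN : forall x, x \in X -> exists w, e x w.
Hypothesis bigT : 4 < #|T|.
Variables a b ya z1 y2 z2 : T.
Hypotheses (aX : a \in X) (aA : forall w, e a w -> w \in Y) (aya : e a ya).
Hypotheses (bX : b \in X) (bB : forall w, e b w -> w \in Z) (bz1 : e b z1).
Hypotheses (y2Y : y2 \in Y) (ny2 : ~~ e a y2) (z2Z : z2 \in Z) (nz2 : ~~ e b z2).

Let Pm : bisplit_partition e X Z Y := bp_mirror sym P.
Let Hmaxm : forall X' Y' Z', bisplit_partition e X' Y' Z' -> #|Y' :|: Z'| <= #|Z :|: Y|.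
Proof.
move=> X' Y' Z' h; rewrite [Z :|: Y]setUC [Y' :|: Z']setUC.
exact: (Hmax (bp_mirror sym h)).
Qed.
Let yaY : ya \in Y := aA aya.
Let z1Z : z1 \in Z := bB bz1.

Let f1 := F1 sym bigT P.
Let f1m := F1 sym bigT Pm.
Let f2 := F2 sym irr bigT P.
Let f2m := F2 sym irr bigT Pm.
Let f3 := F3 sym bigT P.
Let f4 := F4 sym bigT P.
Let f4m := F4 sym bigT Pm.
Let f5 := F5 sym bigT P.
Let f5m := F5 sym bigT Pm.
Let f6 := F6 sym bigT P.
Let f6m := F6 sym bigT Pm.
Let f7 := F7 sym bigT P.
Let f7m := F7 sym bigT Pm.
Let f8 := F8 sym bigT P.
Let f9 := F9 sym bigT P.
Let f10a := F10a sym bigT P.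
Let f10b := F10b sym bigT P.
Let fU := FU sym irr bigT P.

Definition L v := if v == b then line e ya z1
  else if (v \in Y) || ((v \in X) && [forall w, e v w ==> (w \in Y)]) then line e b v
  else line e a v.

Lemma notonlyY v z : e v z -> z \in Z -> [forall w, e v w ==> (w \in Y)] = false.
Proof.
move=> vz zZ; apply/negbTE; rewrite negb_forall; apply/existsP; exists z.
by rewrite vz /=; apply/negP => h; exact: (YZ P h zZ).
Qed.

Lemma LY v : v \in Y -> L v = line e b v.
Proof. by move=> vY; rewrite /L (negbTE (nYX P vY bX)) vY. Qed.

Lemma LZ v : v \in Z -> L v = line e a v.
Proof.
move=> vZ; rewrite /L (negbTE (nZX P vZ bX)).
have -> : (v \in Y) = false by apply/negP => h; exact: (YZ P h vZ).
have -> : (v \in X) = false by apply/negP => h; exact: (XZ P h vZ).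
by [].
Qed.

Lemma LA v : v \in X -> (forall w, e v w -> w \in Y) -> L v = line e b v.
Proof.
move=> vX vA; have vb : v != b by apply/eqP => E; subst; exact: (YZ P (vA _ bz1) z1Z).
rewrite /L (negbTE vb) vX.
have -> : [forall w, e v w ==> (w \in Y)] by apply/forallP => w; apply/implyP; exact: vA.
by rewrite orbT.
Qed.

Lemma Lb : L b = line e ya z1.
Proof. by rewrite /L eqxx. Qed.

Lemma LB v : v \in X -> (forall w, e v w -> w \in Z) -> v != b -> L v = line e a v.
Proof.
move=> vX vB vb; have [w vw] := HN vX.
rewrite /L (negbTE vb) (notonlyY vw (vB _ vw)).
have -> : (v \in Y) = false by apply/negP => h; exact: (XY P vX h).
by rewrite andbF.
Qed.

Lemma LC v : v \in X -> (exists2 y, e v y & y \in Y) -> (exists2 z, e v z & z \in Z) ->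
  L v = line e a v.
Proof.
move=> vX [y vy yY] [z vz zZ].
have vb : v != b by apply/eqP => E; subst; exact: (YZ P yY (bB vy)).
rewrite /L (negbTE vb) (notonlyY vz zZ).
have -> : (v \in Y) = false by apply/negP => h; exact: (XY P vX h).
by rewrite andbF.
Qed.

Lemma wit (A B : {set T}) w : w \in A -> w \notin B -> A = B -> False.
Proof. by move=> h1 h2 E; rewrite E in h1; rewrite h1 in h2. Qed.

Lemma otherY y : y \in Y -> exists2 y', y' \in Y & y != y'.
Proof.
move=> yY; case: (eqVneq y ya) => [->|ne]; last by exists ya.
exists y2 => //; apply/eqP => E; move: ny2; by rewrite -E aya.
Qed.

Lemma otherZ z : z \in Z -> exists2 z', z' \in Z & z != z'.
Proof.
move=> zZ; case: (eqVneq z z1) => [->|ne]; last by exists z1.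
exists z2 => //; apply/eqP => E; move: nz2; by rewrite -E bz1.
Qed.

Lemma cls v : vclass e X Y Z b v.
Proof.
case: (cov P v) => [vX|vY|vZ]; [|by constructor|by constructor].
case: (boolP [forall w, e v w ==> (w \in Y)]) => [/forallP hA|].
  by apply: CA => // w h; move: (hA w); rewrite h.
rewrite negb_forall => /existsP[z]; rewrite negb_imply => /andP[vz nzY].
have zZ : z \in Z.
  case: (cov P z) => // zX; [by case: (stX P vX zX vz) | by rewrite zX in nzY].
case: (boolP [forall w, e v w ==> (w \in Z)]) => [/forallP hB|].
  case: (eqVneq v b) => [->|ne]; first exact: Cb.
  by apply: CB => // w h; move: (hB w); rewrite h.
rewrite negb_forall => /existsP[y]; rewrite negb_imply => /andP[vy nyZ].
have yY : y \in Y.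
  case: (cov P y) => // yX; [by case: (stX P vX yX vy) | by rewrite yX in nyZ].
apply: CC => //; [by exists y | by exists z].
Qed.

                
Lemma sYY u v : L u = L v -> u \in Y -> v \in Y -> u = v.
Proof.
move=> E uY vY; move: E; rewrite (LY uY) (LY vY) => E.
case: (eqVneq u v) => // ne; exfalso.
exact: (wit (line_r e b v) (f1 bX bB bz1 uY vY ne) (esym E)).
Qed.

Lemma sZZ u v : L u = L v -> u \in Z -> v \in Z -> u = v.
Proof.
move=> E uZ vZ; move: E; rewrite (LZ uZ) (LZ vZ) => E.
case: (eqVneq u v) => // ne; exfalso.
exact: (wit (line_r e a v) (f1m aX aA aya uZ vZ ne) (esym E)).
Qed.

Lemma sAA u v : L u = L v -> u \in X -> (forall w, e u w -> w \in Y) ->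
  v \in X -> (forall w, e v w -> w \in Y) -> u = v.
Proof.
move=> E uX uA vX vA; move: E; rewrite (LA uX uA) (LA vX vA) => E.
case: (eqVneq u v) => // ne; exfalso.
have [yu uyu] := HN uX; have [yv vyv] := HN vX.
exact: (wit (line_r e b v) (f4 uX uA uyu vX vA vyv bX bB bz1 ne) (esym E)).
Qed.

Lemma sBB u v : L u = L v -> u \in X -> (forall w, e u w -> w \in Z) -> u != b ->
  v \in X -> (forall w, e v w -> w \in Z) -> v != b -> u = v.
Proof.
move=> E uX uB ub vX vB vb; move: E; rewrite (LB uX uB ub) (LB vX vB vb) => E.
case: (eqVneq u v) => // ne; exfalso.
have [zu uzu] := HN uX; have [zv vzv] := HN vX.
exact: (wit (line_r e a v) (f4m uX uB uzu vX vB vzv aX aA aya ne) (esym E)).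
Qed.

Lemma sCC u v : L u = L v -> u \in X -> (exists2 y, e u y & y \in Y) -> (exists2 z, e u z & z \in Z) ->
  v \in X -> (exists2 y, e v y & y \in Y) -> (exists2 z, e v z & z \in Z) -> u = v.
Proof.
move=> E uX hyu hzu vX hyv hzv; move: E; rewrite (LC uX hyu hzu) (LC vX hyv hzv) => E.
case: (eqVneq u v) => // ne; exfalso.
case: hyu => yu uyu yuY; case: hzu => zu uzu zuZ.
case: hyv => yv vyv yvY; case: hzv => zv vzv zvZ.
exact: (wit (line_r e a v)
  (f9 aX aA aya uX uyu yuY uzu zuZ vX vyv yvY vzv zvZ ne) (esym E)).
Qed.


Lemma nc_of v : ~~ [exists w, e a w && e w v] -> forall w, e a w -> e w v -> False.
Proof. by move=> hn w h1 h2; move/negP: hn; apply; apply/existsP; exists w; rewrite h1 h2. Qed.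

Lemma kYZ u v : L u = L v -> u \in Y -> v \in Z -> False.
Proof.
move=> E uY vZ; move: E; rewrite (LY uY) (LZ vZ) => E.
have [y' y'Y ne] := otherY uY.
exact: (wit (f2m aX aA aya vZ y'Y) (f1 bX bB bz1 uY y'Y ne) (esym E)).
Qed.

Lemma kYA u v : L u = L v -> u \in Y -> v \in X -> (forall w, e v w -> w \in Y) -> False.
Proof.
move=> E uY vX vA; move: E; rewrite (LY uY) (LA vX vA) => E.
have [yv vyv] := HN vX.
exact: (wit (f2 bX bB bz1 uY z2Z) (f5 vX vA vyv bX bB bz1 z2Z nz2) E).
Qed.

Lemma kYb u : L u = L b -> u \in Y -> False.
Proof.
move=> E uY; move: E; rewrite (LY uY) Lb => E.
have [y' y'Y ne] := otherY uY.
exact: (wit (fU yaY z1Z (or_introl y'Y)) (f1 bX bB bz1 uY y'Y ne) (esym E)).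
Qed.

Lemma kYB u v : L u = L v -> u \in Y -> v \in X -> (forall w, e v w -> w \in Z) -> v != b -> False.
Proof.
move=> E uY vX vB vb; move: E; rewrite (LY uY) (LB vX vB vb) => E.
have [z zZ nvz] := M1 sym irr Pm Hmaxm vX vB.
have [zv vzv] := HN vX.
exact: (wit (f2 bX bB bz1 uY zZ) (f6m vX vB vzv aX aA aya zZ nvz) E).
Qed.

Lemma kYC u v : L u = L v -> u \in Y ->
  v \in X -> (exists2 y, e v y & y \in Y) -> (exists2 z, e v z & z \in Z) -> False.
Proof.
move=> E uY vX hy hz; move: E; rewrite (LY uY) (LC vX hy hz) => E.
case: hy => yv vyv yvY; case: hz => zv vzv zvZ.
case: (boolP [exists w, e a w && e w v]) => [/existsP[w /andP[aw wv]]|hn].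
  exact: (wit (f2 bX bB bz1 uY z1Z) (f10a aX aA vX vzv zvZ aw wv z1Z) E).
have nc := nc_of hn.
have h1 : e v u by apply: (f3 bX bB bz1 uY vX vyv yvY vzv zvZ); rewrite E line_r.
have h2 : e a u by apply: (f10b aX aA aya vX vzv zvZ nc uY); rewrite -E line_r.
by apply: (nc u h2); rewrite sym.
Qed.

Lemma kZA u v : L u = L v -> u \in Z -> v \in X -> (forall w, e v w -> w \in Y) -> False.
Proof.
move=> E uZ vX vA; move: E; rewrite (LZ uZ) (LA vX vA) => E.
have [y yY nvy] := M1 sym irr P Hmax vX vA.
have [yv vyv] := HN vX.
exact: (wit (f2m aX aA aya uZ yY) (f6 vX vA vyv bX bB bz1 yY nvy) E).
Qed.

Lemma kZb u : L u = L b -> u \in Z -> False.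
Proof.
move=> E uZ; move: E; rewrite (LZ uZ) Lb => E.
have [z' z'Z ne] := otherZ uZ.
exact: (wit (fU yaY z1Z (or_intror z'Z)) (f1m aX aA aya uZ z'Z ne) (esym E)).
Qed.

Lemma kZB u v : L u = L v -> u \in Z -> v \in X -> (forall w, e v w -> w \in Z) -> v != b -> False.
Proof.
move=> E uZ vX vB vb; move: E; rewrite (LZ uZ) (LB vX vB vb) => E.
have [zv vzv] := HN vX.
exact: (wit (f2m aX aA aya uZ y2Y) (f5m vX vB vzv aX aA aya y2Y ny2) E).
Qed.

Lemma kZC u v : L u = L v -> u \in Z ->
  v \in X -> (exists2 y, e v y & y \in Y) -> (exists2 z, e v z & z \in Z) -> False.
Proof.
move=> E uZ vX hy hz; move: E; rewrite (LZ uZ) (LC vX hy hz) => E.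
case: hy => yv vyv yvY; case: hz => zv vzv zvZ.
case: (boolP [exists w, e a w && e w v]) => [/existsP[w /andP[aw wv]]|hn].
  exact: (wit (line_r e a u) (f10a aX aA vX vzv zvZ aw wv uZ) E).
have nc := nc_of hn.
have h : e a y2 by apply: (f10b aX aA aya vX vzv zvZ nc y2Y); rewrite -E; exact: (f2m aX aA aya uZ y2Y).
by move: ny2; rewrite h.
Qed.

Lemma kAb u : L u = L b -> u \in X -> (forall w, e u w -> w \in Y) -> False.
Proof.
move=> E uX uA; move: E; rewrite (LA uX uA) Lb => E.
have [y yY nuy] := M1 sym irr P Hmax uX uA.
have [yu uyu] := HN uX.
exact: (wit (fU yaY z1Z (or_introl yY)) (f6 uX uA uyu bX bB bz1 yY nuy) (esym E)).
Qed.

Lemma kAB u v : L u = L v -> u \in X -> (forall w, e u w -> w \in Y) ->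
  v \in X -> (forall w, e v w -> w \in Z) -> v != b -> False.
Proof.
move=> E uX uA vX vB vb; move: E; rewrite (LA uX uA) (LB vX vB vb) => E.
have [yu uyu] := HN uX; have [zv vzv] := HN vX.
exact: (wit (line_r e a v) (f8 uX uA uyu bX bB bz1 vX vB vzv vb) (esym E)).
Qed.

Lemma kAC u v : L u = L v -> u \in X -> (forall w, e u w -> w \in Y) ->
  v \in X -> (exists2 y, e v y & y \in Y) -> (exists2 z, e v z & z \in Z) -> False.
Proof.
move=> E uX uA vX hy hz; move: E; rewrite (LA uX uA) (LC vX hy hz) => E.
case: hy => yv vyv yvY; case: hz => zv vzv zvZ.
have [yu uyu] := HN uX.
exact: (wit (line_r e a v) (f7 uX uA uyu bX bB bz1 vX vyv yvY vzv zvZ) (esym E)).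
Qed.

Lemma kbB v : L b = L v -> v \in X -> (forall w, e v w -> w \in Z) -> v != b -> False.
Proof.
move=> E vX vB vb; move: E; rewrite Lb (LB vX vB vb) => E.
have [z zZ nvz] := M1 sym irr Pm Hmaxm vX vB.
have [zv vzv] := HN vX.
exact: (wit (fU yaY z1Z (or_intror zZ)) (f6m vX vB vzv aX aA aya zZ nvz) E).
Qed.

Lemma kbC v : L b = L v ->
  v \in X -> (exists2 y, e v y & y \in Y) -> (exists2 z, e v z & z \in Z) -> False.
Proof.
move=> E vX hy hz; move: E; rewrite Lb (LC vX hy hz) => E.
case: hy => yv vyv yvY; case: hz => zv vzv zvZ.
case: (boolP [exists w, e a w && e w v]) => [/existsP[w /andP[aw wv]]|hn].
  exact: (wit (fU yaY z1Z (or_intror z1Z)) (f10a aX aA vX vzv zvZ aw wv z1Z) E).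
have nc := nc_of hn.
have h : e a y2 by apply: (f10b aX aA aya vX vzv zvZ nc y2Y); rewrite -E; exact: (fU yaY z1Z (or_introl y2Y)).
by move: ny2; rewrite h.
Qed.

Lemma kBC u v : L u = L v -> u \in X -> (forall w, e u w -> w \in Z) -> u != b ->
  v \in X -> (exists2 y, e v y & y \in Y) -> (exists2 z, e v z & z \in Z) -> False.
Proof.
move=> E uX uB ub vX hy hz; move: E; rewrite (LB uX uB ub) (LC vX hy hz) => E.
case: hy => yv vyv yvY; case: hz => zv vzv zvZ.
have [zu uzu] := HN uX.
exact: (wit (line_r e a v) (f7m uX uB uzu aX aA aya vX vzv zvZ vyv yvY) (esym E)).
Qed.

Lemma L_inj : injective L.
Proof.
move=> u v.
case: (cls u) => [hu|hu|hu1 hu2|->|hu1 hu2 hu3|hu1 hu2 hu3];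
case: (cls v) => [hv|hv|hv1 hv2|->|hv1 hv2 hv3|hv1 hv2 hv3] E;
first [ done
      | by apply: (sYY E) | by apply: (sZZ E) | by apply: (sAA E)
      | by apply: (sBB E) | by apply: (sCC E)
      | exfalso; first
        [ by apply: (kYZ E) | by apply: (kYZ (esym E))
        | by apply: (kYA E) | by apply: (kYA (esym E))
        | by apply: (kYb E) | by apply: (kYb (esym E))
        | by apply: (kYB E) | by apply: (kYB (esym E))
        | by apply: (kYC E) | by apply: (kYC (esym E))
        | by apply: (kZA E) | by apply: (kZA (esym E))
        | by apply: (kZb E) | by apply: (kZb (esym E))
        | by apply: (kZB E) | by apply: (kZB (esym E))
        | by apply: (kZC E) | by apply: (kZC (esym E))
        | by apply: (kAb E) | by apply: (kAb (esym E))
        | by apply: (kAB E) | by apply: (kAB (esym E))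
        | by apply: (kAC E) | by apply: (kAC (esym E))
        | by apply: (kbB E) | by apply: (kbB (esym E))
        | by apply: (kbC E) | by apply: (kbC (esym E))
        | by apply: (kBC E) | by apply: (kBC (esym E)) ] ].
Qed.

Lemma L_lines v : L v \in lines e.
Proof.
rewrite /L; case: eqP => [_|nb].
  apply/imsetP; exists (ya, z1) => //; rewrite inE /=; exact: (nYZ P yaY z1Z).
case: ifP => ht.
  apply/imsetP; exists (b, v) => //; rewrite inE /=; apply/eqP => E; exact: nb (esym E).
apply/imsetP; exists (a, v) => //; rewrite inE /=; apply/eqP => E; subst v.
move: ht; rewrite aX /=.
have -> : [forall w, e a w ==> (w \in Y)] by apply/forallP => w; apply/implyP; exact: aA.
by rewrite orbT.
Qed.

Lemma count_lines : #|T| <= #|lines e|.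
Proof.
have <- : #|[set L v | v in [set: T]]| = #|T| by rewrite card_imset ?cardsT //; exact: L_inj.
apply: subset_leq_card; apply/subsetP => _ /imsetP[v _ ->]; exact: L_lines.
Qed.

End Main.

Theorem proposition2 (T : finType) (e : rel T) (X Y Z : {set T}) :
  simple_graph e -> connected_graph e ->
  max_bisplit_partition e X Y Z ->
  X_nbrs_in e X Y != set0 -> X_nbrs_in e X Z != set0 ->
  de_bruijn_erdos e.
Proof.
move=> [sym irr] conn [P Hmax] hA hB.
have Pm : bisplit_partition e X Z Y := bp_mirror sym P.
have Hmaxm : forall X' Y' Z', bisplit_partition e X' Y' Z' -> #|Y' :|: Z'| <= #|Z :|: Y|.
  move=> X' Y' Z' h; rewrite [Z :|: Y]setUC [Y' :|: Z']setUC.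
  exact: (Hmax _ _ _ (bp_mirror sym h)).
case/set0Pn: hA => a; rewrite inE => /andP[aX /forallP aA'].
have aA : forall w, e a w -> w \in Y by move=> w h; move: (aA' w); rewrite h.
case/set0Pn: hB => b; rewrite inE => /andP[bX /forallP bB'].
have bB : forall w, e b w -> w \in Z by move=> w h; move: (bB' w); rewrite h.
have HN := M0 irr conn P Hmax.
have [ya aya] := HN a aX; have yaY := aA _ aya.
have [z1 bz1] := HN b bX; have z1Z := bB _ bz1.
have [y2 y2Y ny2] := M1 sym irr P Hmax aX aA.
have [z2 z2Z nz2] := M1 sym irr Pm Hmaxm bX bB.
have ab : a != b by apply/eqP => E; subst; exact: (YZ P yaY (bB _ aya)).
have yay2 : ya != y2 by apply/eqP => E; subst; by rewrite aya in ny2.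
have bigT : 4 < #|T|.
  have hu : uniq [:: a; b; ya; y2; z1].
    rewrite /= !inE !negb_or ab (nXY P aX yaY) (nXY P aX y2Y) (nXZ P aX z1Z).
    rewrite (nXY P bX yaY) (nXY P bX y2Y) (nXZ P bX z1Z) yay2 (nYZ P yaY z1Z).
    by rewrite (nYZ P y2Y z1Z).
  have := max_card (mem [:: a; b; ya; y2; z1]).
  by move/card_uniqP: hu => ->.
right.
exact: (count_lines sym irr P Hmax HN bigT aX aA aya bX bB bz1 y2Y ny2 z2Z nz2).
Qed.
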